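(* Let $A=(A,m,1,\Delta,\varepsilon,S)$ be a Hopf algebra over a field $k$. Then the category $\mathcal{CB}(A)$ of Hopf braces on $A$ is equivalent to the category $\mathcal{C}(A)$ of bijective 1-cocycles with domain $A$.
   Context: All objects are over a field $k$; Sweedler notation $\Delta(a)=a_1\otimes a_2$, $\Delta'(a)=a_{1'}\otimes a_{2'}$, left coactions $\rho(a)=a_{(-1)}\otimes a_{(0)}$. A Hopf brace $(A,\Delta,\Delta')$ consists of an algebra $(A,m,1)$ with two Hopf algebra structures $(A,m,1,\Delta,\varepsilon,S)$ and $(A,m,1,\Delta',\epsilon,T)$ such that for all $h$: $h_{1'}\otimes h_{2'1}\otimes h_{2'2}=h_{11'}S(h_2)h_{31'}\otimes h_{12'}\otimes h_{32'}$ (here $h_{31'}$ means $\Delta'$ applied to $h_3$, etc.). A morphism of Hopf braces $f:(H,\Delta,\Delta')\to(G,\Delta,\Delta')$ is a linear map that is a Hopf algebra homomorphism both for the first structures and for the second structures. $\mathcal{CB}(A)$ is the full subcategory of Hopf braces whose objects are Hopf braces $(A,\Delta,\Delta')$ whose first Hopf algebra structure is the given one $(A,m,1,\Delta,\varepsilon,S)$. Given Hopf algebras $H$ and $A$ with $A$ a left $H$-comodule coalgebra (a left $H$-comodule with $a_{(-1)}\otimes a_{(0)1}\otimes a_{(0)2}=a_{1(-1)}a_{2(-1)}\otimes a_{1(0)}\otimes a_{2(0)}$ and $a_{(-1)}\varepsilon(a_{(0)})=\varepsilon(a)1_H$), a bijective 1-cocycle is an algebra isomorphism $\pi:A\to H$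 such that $\pi(a)_1\otimes\pi(a)_2=\pi(a_1)a_{2(-1)}\otimes\pi(a_{2(0)})$ for all $a\in A$ (the comodule coalgebra structure is part of the data). A morphism from a bijective 1-cocycle $\eta:B\to K$ to a bijective 1-cocycle $\pi:A\to H$ is a pair $(f,g)$ of Hopf algebra maps $f:K\to H$, $g:B\to A$ with $\pi g=f\eta$ and $g(b)_{(-1)}\otimes g(b)_{(0)}=f(b_{(-1)})\otimes g(b_{(0)})$ for all $b\in B$. $\mathcal{C}(A)$ is the full subcategory of bijective 1-cocycles whose objects are the bijective 1-cocycles $\pi:A\to H$ with domain the fixed Hopf algebra $A$. *)

(* Defs.v *)
From HB Require Import structures.
From mathcomp Require Import all_boot all_algebra.
From Stdlib Require Import ProofIrrelevance.

Set Implicit Arguments.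
Unset Strict Implicit.
Unset Printing Implicit Defensive.

Import GRing.Theory.
Local Open Scope ring_scope.

Record category := Category {
  cob :> Type;
  chom : cob -> cob -> Type;
  cid : forall x, chom x x;
  ccomp : forall x y z, chom y z -> chom x y -> chom x z;
  ccomp_id_l : forall x y (f : chom x y), ccomp (cid y) f = f;
  ccomp_id_r : forall x y (f : chom x y), ccomp f (cid x) = f;
  ccomp_assoc : forall x y z w (f : chom z w) (g : chom y z) (h : chom x y),
      ccomp f (ccomp g h) = ccomp (ccomp f g) h }.
Arguments cid {c} x.
Arguments ccomp {c x y z}.

Record functor (C D : category) := Functor {
  fobj :> C -> D;
  fmap : forall x y, chom x y -> chom (fobj x) (fobj y);
  fmap_id : forall x, fmap (cid x) = cid (fobj x);
  fmap_comp : forall x y z (f : chom y z) (g : chom x y),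
      fmap (ccomp f g) = ccomp (fmap f) (fmap g) }.
Arguments fmap {C D} _ {x y}.

Definition id_functor (C : category) : functor C C :=
  @Functor C C (fun x => x) (fun x y f => f) (fun x => erefl) (fun x y z f g => erefl).

Definition comp_functor (C D E : category) (G : functor D E) (F : functor C D)
  : functor C E.
Proof.
refine (@Functor C E (fun x => G (F x)) (fun x y f => fmap G (fmap F f)) _ _).
- by move=> x; rewrite !fmap_id.
- by move=> x y z f g; rewrite !fmap_comp.
Defined.

Definition is_iso (C : category) (x y : C) (f : chom x y) :=
  exists g : chom y x, ccomp g f = cid x /\ ccomp f g = cid y.

Definition nat_iso (C D : category) (F G : functor C D) :=
  exists eta : forall x : C, chom (F x) (G x),
    (forall x, is_iso (eta x)) /\
    (forall x y (f : chom x y), ccomp (eta y) (fmap F f) = ccomp (fmap G f) (eta x)).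

Definition cat_equivalent (C D : category) :=
  exists (F : functor C D) (G : functor D C),
    nat_iso (comp_functor G F) (id_functor C) /\
    nat_iso (comp_functor F G) (id_functor D).

Lemma sig_eq_val (T : Type) (P : T -> Prop) (a b : {x | P x}) :
  proj1_sig a = proj1_sig b -> a = b.
Proof.
case: a b => [a pa] [b pb] /= eab; subst b; by rewrite (proof_irrelevance _ pa pb).
Qed.

(* Tensors.  An element of U (x) V (resp. U (x) V (x) W) is represented *)
(* by a finite list of elementary tensors (a Sweedler expression);      *)
(* two such expressions are equal as tensors iff all bilinear (resp.    *)
(* trilinear) forms agree on them (valid since k is a field).           *)

Section Tensors.
Variable k : fieldType.

Definition sbind (T U : Type) (s : seq T) (f : T -> seq U) : seq U :=
  flatten (map f s).

Definition bilinear_form (U V : lmodType k) (phi : U -> V -> k) :=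
  (forall v a x y, phi (a *: x + y) v = a * phi x v + phi y v) /\
  (forall u a x y, phi u (a *: x + y) = a * phi u x + phi u y).

Definition trilinear_form (U V W : lmodType k) (phi : U -> V -> W -> k) :=
  [/\ (forall v w a x y, phi (a *: x + y) v w = a * phi x v w + phi y v w),
      (forall u w a x y, phi u (a *: x + y) w = a * phi u x w + phi u y w) &
      (forall u v a x y, phi u v (a *: x + y) = a * phi u v x + phi u v y)].

Definition teq2 (U V : lmodType k) (s t : seq (U * V)) :=
  forall phi : U -> V -> k, bilinear_form phi ->
    \sum_(p <- s) phi p.1 p.2 = \sum_(p <- t) phi p.1 p.2.

Definition teq3 (U V W : lmodType k) (s t : seq (U * V * W)) :=
  forall phi : U -> V -> W -> k, trilinear_form phi ->
    \sum_(p <- s) phi p.1.1 p.1.2 p.2 = \sum_(p <- t) phi p.1.1 p.1.2 p.2.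

Definition tscale2 (U V : lmodType k) (a : k) (s : seq (U * V)) :=
  [seq (a *: p.1, p.2) | p <- s].

Definition is_linear (U V : lmodType k) (f : U -> V) :=
  forall a x y, f (a *: x + y) = a *: f x + f y.

Record hopf_axioms (A : algType k) (D : A -> seq (A * A)) (e : A -> k)
    (S : A -> A) : Prop := {
  D_lin : forall a x y, teq2 (D (a *: x + y)) (tscale2 a (D x) ++ D y);
  e_lin : forall a x y, e (a *: x + y) = a * e x + e y;
  S_lin : is_linear S;
  D_coassoc : forall x,
    teq3 (sbind (D x) (fun p => [seq (q.1, q.2, p.2) | q <- D p.1]))
         (sbind (D x) (fun p => [seq (p.1, q.1, q.2) | q <- D p.2]));
  e_counit_l : forall x, \sum_(p <- D x) e p.1 *: p.2 = x;
  e_counit_r : forall x, \sum_(p <- D x) e p.2 *: p.1 = x;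
  D_mul : forall x y,
    teq2 (D (x * y)) (sbind (D x) (fun p => [seq (p.1 * q.1, p.2 * q.2) | q <- D y]));
  D_one : teq2 (D 1) [:: (1, 1)];
  e_mul : forall x y, e (x * y) = e x * e y;
  e_one : e 1 = 1;
  S_antipode_l : forall x, \sum_(p <- D x) S p.1 * p.2 = (e x)%:A;
  S_antipode_r : forall x, \sum_(p <- D x) p.1 * S p.2 = (e x)%:A }.

Record hopf_struct (A : algType k) := HopfStruct {
  comul : A -> seq (A * A);
  counit : A -> k;
  antipode : A -> A;
  hopf_ax : hopf_axioms comul counit antipode }.

Record hopfAlg := HopfAlg {
  hcarrier :> algType k;
  hstruct : hopf_struct hcarrier }.

(* morphisms of Hopf algebras (= bialgebra maps) *)
Definition hopf_map (A B : algType k) (hA : hopf_struct A) (hB : hopf_struct B)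
    (f : A -> B) :=
  [/\ is_linear f, f 1 = 1, (forall x y, f (x * y) = f x * f y),
      (forall x, teq2 (comul hB (f x)) [seq (f p.1, f p.2) | p <- comul hA x]) &
      (forall x, counit hB (f x) = counit hA x)].

(* h_{1'} (x) h_{2'1} (x) h_{2'2}
     = h_{11'} S(h_2) h_{31'} (x) h_{12'} (x) h_{32'} *)
Definition brace_compat (A : algType k) (h h' : hopf_struct A) :=
  forall x : A,
    teq3 (sbind (comul h' x) (fun p => [seq (p.1, q.1, q.2) | q <- comul h p.2]))
         (sbind (comul h x) (fun p =>
          sbind (comul h p.2) (fun q =>
          sbind (comul h' p.1) (fun u =>
          [seq (u.1 * antipode h q.1 * v.1, u.2, v.2) | v <- comul h' q.2])))).

Record hopf_brace_on (A : algType k) (h : hopf_struct A) := HopfBraceOn {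
  hb_second : hopf_struct A;
  hb_compat : brace_compat h hb_second }.

Definition hb_hom_prop (A : algType k) (h : hopf_struct A) (B1 B2 : hopf_brace_on h)
    (f : A -> A) :=
  hopf_map h h f /\ hopf_map (hb_second B1) (hb_second B2) f.

Definition comod_coalg (H : hopfAlg) (A : algType k) (hA : hopf_struct A)
    (rho : A -> seq (H * A)) :=
  let hH := hstruct H in
  [/\ (forall a x y, teq2 (rho (a *: x + y)) (tscale2 a (rho x) ++ rho y)),
      (forall x, teq3 (sbind (rho x) (fun p => [seq (q.1, q.2, p.2) | q <- comul hH p.1]))
                      (sbind (rho x) (fun p => [seq (p.1, q.1, q.2) | q <- rho p.2]))),
      (forall x, \sum_(p <- rho x) counit hH p.1 *: p.2 = x),
      (* a_(-1) (x) a_(0)1 (x) a_(0)2 = a_1(-1) a_2(-1) (x) a_1(0) (x) a_2(0) *)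
      (forall x, teq3 (sbind (rho x) (fun p => [seq (p.1, q.1, q.2) | q <- comul hA p.2]))
                      (sbind (comul hA x) (fun p =>
                       sbind (rho p.1) (fun u =>
                       [seq (u.1 * v.1, u.2, v.2) | v <- rho p.2])))) &
      (forall x, \sum_(p <- rho x) counit hA p.2 *: p.1 = (counit hA x)%:A)].

Definition bij_cocycle (A : algType k) (hA : hopf_struct A) (H : hopfAlg)
    (rho : A -> seq (H * A)) (pi : A -> H) :=
  [/\ is_linear pi, pi 1 = 1, (forall x y, pi (x * y) = pi x * pi y),
      bijective pi &
      (* pi(a)_1 (x) pi(a)_2 = pi(a_1) a_2(-1) (x) pi(a_2(0)) *)
      (forall x, teq2 (comul (hstruct H) (pi x))
                      (sbind (comul hA x) (fun p =>
                        [seq (pi p.1 * u.1, pi u.2) | u <- rho p.2])))].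

Record cocycle_on (A : algType k) (hA : hopf_struct A) := CocycleOn {
  cc_H : hopfAlg;
  cc_rho : A -> seq (cc_H * A);
  cc_pi : A -> cc_H;
  cc_comod : comod_coalg hA cc_rho;
  cc_cocycle : bij_cocycle hA cc_rho cc_pi }.

Definition cc_hom_prop (A : algType k) (hA : hopf_struct A) (E P : cocycle_on hA)
    (fg : (cc_H E -> cc_H P) * (A -> A)) :=
  let f := fg.1 in let g := fg.2 in
  [/\ hopf_map (hstruct (cc_H E)) (hstruct (cc_H P)) f,
      hopf_map hA hA g,
      (forall x, cc_pi P (g x) = f (cc_pi E x)) &
      (forall x, teq2 (cc_rho P (g x)) [seq (f p.1, g p.2) | p <- cc_rho E x])].

Arguments cc_hom_prop {A hA} E P fg.

Lemma teq2_trans (U V : lmodType k) (s t u : seq (U * V)) :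
  teq2 s t -> teq2 t u -> teq2 s u.
Proof. by move=> h1 h2 phi hphi; rewrite h1 // h2. Qed.

Lemma teq2_refl (U V : lmodType k) (s : seq (U * V)) : teq2 s s.
Proof. by []. Qed.

Lemma teq2_map (U V U' V' : lmodType k) (f : U -> U') (g : V -> V')
    (s t : seq (U * V)) :
  is_linear f -> is_linear g -> teq2 s t ->
  teq2 [seq (f p.1, g p.2) | p <- s] [seq (f p.1, g p.2) | p <- t].
Proof.
move=> lf lg h phi [h1 h2]; rewrite !big_map /=.
apply: (h (fun u v => phi (f u) (g v))); split.
- by move=> v a x y; rewrite lf h1.
- by move=> u a x y; rewrite lg h2.
Qed.

Lemma teq2_pair (U V : lmodType k) (s : seq (U * V)) :
  teq2 s [seq (p.1, p.2) | p <- s].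
Proof. by move=> phi _; rewrite big_map; apply: eq_bigr => -[]. Qed.

Lemma is_linear_comp (U V W : lmodType k) (f : V -> W) (g : U -> V) :
  is_linear f -> is_linear g -> is_linear (fun x => f (g x)).
Proof. by move=> lf lg a x y; rewrite lg lf. Qed.

Lemma is_linear_id (U : lmodType k) : is_linear (fun x : U => x).
Proof. by []. Qed.

Lemma hopf_map_id (A : algType k) (h : hopf_struct A) : hopf_map h h (fun x => x).
Proof. by split=> // x; apply: teq2_pair. Qed.

Lemma hopf_map_comp (A B C : algType k) (hA : hopf_struct A) (hB : hopf_struct B)
    (hC : hopf_struct C) (f : B -> C) (g : A -> B) :
  hopf_map hB hC f -> hopf_map hA hB g -> hopf_map hA hC (fun x => f (g x)).
Proof.
case=> lf f1 fM fD fe [lg g1 gM gD ge]; split.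
- exact: is_linear_comp.
- by rewrite g1 f1.
- by move=> x y; rewrite gM fM.
- move=> x; apply: teq2_trans (fD (g x)) _.
  apply: teq2_trans (teq2_map lf lf (gD x)) _.
  rewrite -map_comp; exact: teq2_refl.
- by move=> x; rewrite fe ge.
Qed.

Section CB.
Variables (A : algType k) (h : hopf_struct A).

Definition cb_hom (B1 B2 : hopf_brace_on h) := {f : A -> A | hb_hom_prop B1 B2 f}.

Definition cb_id (B : hopf_brace_on h) : cb_hom B B :=
  exist _ (fun x => x) (conj (hopf_map_id h) (hopf_map_id (hb_second B))).

Definition cb_comp (B1 B2 B3 : hopf_brace_on h) (f : cb_hom B2 B3) (g : cb_hom B1 B2)
  : cb_hom B1 B3 :=
  exist _ (fun x => proj1_sig f (proj1_sig g x))
    (conj (hopf_map_comp (proj1 (proj2_sig f)) (proj1 (proj2_sig g)))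
          (hopf_map_comp (proj2 (proj2_sig f)) (proj2 (proj2_sig g)))).

Definition CB : category.
Proof.
refine (@Category (hopf_brace_on h) cb_hom cb_id cb_comp _ _ _).
- by move=> x y f; apply: sig_eq_val.
- by move=> x y f; apply: sig_eq_val.
- by move=> x y z w f g i; apply: sig_eq_val.
Defined.

End CB.

Section CC.
Variables (A : algType k) (hA : hopf_struct A).

Definition cc_hom (E P : cocycle_on hA) :=
  {fg : (cc_H E -> cc_H P) * (A -> A) | cc_hom_prop E P fg}.

Lemma cc_id_prop (E : cocycle_on hA) : cc_hom_prop E E (fun x => x, fun x => x).
Proof.
rewrite /cc_hom_prop /=; split=> //; try exact: hopf_map_id.
by move=> x; apply: teq2_pair.
Qed.

Definition cc_id (E : cocycle_on hA) : cc_hom E E := exist _ _ (cc_id_prop E).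

Lemma cc_comp_prop (E1 E2 E3 : cocycle_on hA) (f : cc_hom E2 E3) (g : cc_hom E1 E2) :
  cc_hom_prop E1 E3 (fun x => (proj1_sig f).1 ((proj1_sig g).1 x),
                     fun x => (proj1_sig f).2 ((proj1_sig g).2 x)).
Proof.
case: f g => [[f1 f2] [hf1 hf2 hfp hfr]] [[g1 g2] [hg1 hg2 hgp hgr]] /=.
rewrite /cc_hom_prop /=; split.
simpl in *.
- exact: hopf_map_comp hf1 hg1.
- exact: hopf_map_comp hf2 hg2.
- by move=> x; rewrite hfp hgp.
- move=> x; apply: teq2_trans (hfr (g2 x)) _.
  have := teq2_map (let: And5 l _ _ _ _ := hf1 in l) (let: And5 l _ _ _ _ := hf2 in l) (hgr x).
  rewrite -!map_comp; apply: teq2_trans; exact: teq2_refl.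
Qed.

Definition cc_comp (E1 E2 E3 : cocycle_on hA) (f : cc_hom E2 E3) (g : cc_hom E1 E2)
  : cc_hom E1 E3 := exist _ _ (cc_comp_prop f g).

Definition CC : category.
Proof.
refine (@Category (cocycle_on hA) cc_hom cc_id cc_comp _ _ _).
- by move=> x y [[f g] p]; apply: sig_eq_val.
- by move=> x y [[f g] p]; apply: sig_eq_val.
- by move=> x y z w f g i; apply: sig_eq_val.
Defined.

End CC.

End Tensors.

(* Main.v *)
Require Import Defs.
From HB Require Import structures.
From mathcomp Require Import all_boot all_algebra.
From Stdlib Require Import ProofIrrelevance FunctionalExtensionality ClassicalEpsilon.
From mathcomp Require Import ring.
Set Implicit Arguments. Unset Strict Implicit. Unset Printing Implicit Defensive.
Import GRing.Theory.
Local Open Scope ring_scope.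

Section Infra.
Variable k : fieldType.

Definition lin (U : lmodType k) (f : U -> k) :=
  forall a x y, f (a *: x + y) = a * f x + f y.

Lemma lin0 (U : lmodType k) (f : U -> k) : lin f -> f 0 = 0.
Proof.
move=> h; have h0 := h 1 0 0; rewrite scale1r addr0 mul1r in h0.
by apply: (addrI (f 0)); rewrite addr0 -h0.
Qed.

Lemma linD (U : lmodType k) (f : U -> k) x y : lin f -> f (x + y) = f x + f y.
Proof. by move=> h; have := h 1 x y; rewrite scale1r mul1r. Qed.

Lemma linZ (U : lmodType k) (f : U -> k) a x : lin f -> f (a *: x) = a * f x.
Proof. by move=> h; have := h a x 0; rewrite addr0 (lin0 h) addr0. Qed.

Lemma lin_sum (U : lmodType k) (f : U -> k) I (s : seq I) (F : I -> U) :
  lin f -> f (\sum_(i <- s) F i) = \sum_(i <- s) f (F i).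
Proof.
move=> h; elim: s => [|x s IH]; first by rewrite !big_nil (lin0 h).
by rewrite !big_cons (linD _ _ h) IH.
Qed.

Lemma vlin0 (U V : lmodType k) (f : U -> V) : is_linear f -> f 0 = 0.
Proof.
move=> h; have h0 := h 1 0 0; rewrite scale1r addr0 scale1r in h0.
by apply: (addrI (f 0)); rewrite addr0 -h0.
Qed.

Lemma vlinD (U V : lmodType k) (f : U -> V) x y : is_linear f -> f (x + y) = f x + f y.
Proof. by move=> h; have := h 1 x y; rewrite !scale1r. Qed.

Lemma vlinZ (U V : lmodType k) (f : U -> V) a x : is_linear f -> f (a *: x) = a *: f x.
Proof. by move=> h; have := h a x 0; rewrite addr0 (vlin0 h) addr0. Qed.

Lemma vlin_sum (U V : lmodType k) (f : U -> V) I (s : seq I) (F : I -> U) :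
  is_linear f -> f (\sum_(i <- s) F i) = \sum_(i <- s) f (F i).
Proof.
move=> h; elim: s => [|x s IH]; first by rewrite !big_nil (vlin0 h).
by rewrite !big_cons (vlinD _ _ h) IH.
Qed.

Definition bil (U V : lmodType k) (F : U * V -> k) :=
  (forall v, lin (fun u => F (u, v))) /\ (forall u, lin (fun v => F (u, v))).

Definition tri (U V W : lmodType k) (G : U -> V -> W -> k) :=
  [/\ forall v w, lin (fun u => G u v w), forall u w, lin (fun v => G u v w)
    & forall u v, lin (fun w => G u v w)].

Lemma sum_pair (U V : Type) (s : seq (U * V)) (F : U * V -> k) :
  \sum_(p <- s) F (p.1, p.2) = \sum_(p <- s) F p.
Proof. by apply: eq_bigr => -[]. Qed.

Lemma teq2E (U V : lmodType k) (s t : seq (U * V)) F :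
  teq2 s t -> bil F -> \sum_(p <- s) F p = \sum_(p <- t) F p.
Proof.
move=> h [h1 h2]; rewrite -!(sum_pair _ F).
by apply: (h (fun u v => F (u, v))); split=> *; [apply: h1 | apply: h2].
Qed.

Lemma teq3E (U V W : lmodType k) (s t : seq (U * V * W)) G :
  teq3 s t -> tri G ->
  \sum_(p <- s) G p.1.1 p.1.2 p.2 = \sum_(p <- t) G p.1.1 p.1.2 p.2.
Proof. by move=> h [h1 h2 h3]; apply: h; split=> *; [apply: h1|apply: h2|apply: h3]. Qed.

Lemma teq2I (U V : lmodType k) (s t : seq (U * V)) :
  (forall F, bil F -> \sum_(p <- s) F p = \sum_(p <- t) F p) -> teq2 s t.
Proof.
move=> h phi [h1 h2]; apply: (h (fun p => phi p.1 p.2)).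
by split=> u a x y /=; [apply: h1 | apply: h2].
Qed.

Lemma teq3I (U V W : lmodType k) (s t : seq (U * V * W)) :
  (forall G, tri G -> \sum_(p <- s) G p.1.1 p.1.2 p.2 = \sum_(p <- t) G p.1.1 p.1.2 p.2)
  -> teq3 s t.
Proof.
move=> h phi [h1 h2 h3]; apply: h.
by split=> u v a x y /=; [apply: h1 | apply: h2 | apply: h3].
Qed.

Lemma sum_sbind (T U : Type) (s : seq T) (f : T -> seq U) (F : U -> k) :
  \sum_(p <- sbind s f) F p = \sum_(p <- s) \sum_(q <- f p) F q.
Proof.
rewrite /sbind; elim: s => [|x s IH] /=; first by rewrite !big_nil.
by rewrite big_cat big_cons IH.
Qed.

Definition tlin (U V W : lmodType k) (T : U -> seq (V * W)) :=
  forall a x y, teq2 (T (a *: x + y)) (tscale2 a (T x) ++ T y).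

Lemma lin_tsum (U V W : lmodType k) (T : U -> seq (V * W)) F :
  tlin T -> bil F -> lin (fun x => \sum_(p <- T x) F p).
Proof.
move=> hT hF a x y; rewrite (teq2E (hT a x y) hF) big_cat big_map /= mulr_sumr.
congr (_ + _); apply: eq_bigr => -[u v] _ /=.
by rewrite (linZ _ _ (hF.1 v)).
Qed.

Lemma T_sum (U : lmodType k) I (s : seq I) (F : U -> I -> k) :
  (forall p, lin (fun u => F u p)) -> lin (fun u => \sum_(p <- s) F u p).
Proof.
by move=> h a x y; rewrite mulr_sumr -big_split; apply: eq_bigr => p _; apply: h.
Qed.

Lemma T_tsum (U U' V W : lmodType k) (T : U' -> seq (V * W)) (g : U -> U') F :
  tlin T -> bil F -> is_linear g -> lin (fun u => \sum_(p <- T (g u)) F p).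
Proof. by move=> hT hF hg a x y; rewrite hg; apply: lin_tsum. Qed.

Lemma T_mull (U : lmodType k) (f : U -> k) c : lin f -> lin (fun u => c * f u).
Proof. by move=> h a x y; rewrite h mulrDr mulrCA. Qed.

Lemma T_mulr (U : lmodType k) (f : U -> k) c : lin f -> lin (fun u => f u * c).
Proof. by move=> h a x y; rewrite h mulrDl mulrA. Qed.

Lemma T_comp (U V : lmodType k) (f : V -> k) (g : U -> V) :
  lin f -> is_linear g -> lin (fun u => f (g u)).
Proof. by move=> hf hg a x y; rewrite hg hf. Qed.

Lemma T_bf1 (U V W : lmodType k) (phi : U -> V -> k) (g : W -> U) v :
  bilinear_form phi -> is_linear g -> lin (fun u => phi (g u) v).
Proof. by move=> [h1 h2] hg a x y; rewrite hg h1. Qed.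
Lemma T_bf2 (U V W : lmodType k) (phi : U -> V -> k) (g : W -> V) u :
  bilinear_form phi -> is_linear g -> lin (fun v => phi u (g v)).
Proof. by move=> [h1 h2] hg a x y; rewrite hg h2. Qed.
Lemma T_tf1 (U V W X : lmodType k) (phi : U -> V -> W -> k) (g : X -> U) v w :
  trilinear_form phi -> is_linear g -> lin (fun u => phi (g u) v w).
Proof. by move=> [h1 h2 h3] hg a x y; rewrite hg h1. Qed.
Lemma T_tf2 (U V W X : lmodType k) (phi : U -> V -> W -> k) (g : X -> V) u w :
  trilinear_form phi -> is_linear g -> lin (fun v => phi u (g v) w).
Proof. by move=> [h1 h2 h3] hg a x y; rewrite hg h2. Qed.
Lemma T_tf3 (U V W X : lmodType k) (phi : U -> V -> W -> k) (g : X -> W) u v :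
  trilinear_form phi -> is_linear g -> lin (fun w => phi u v (g w)).
Proof. by move=> [h1 h2 h3] hg a x y; rewrite hg h3. Qed.
Lemma T_tri1 (U V W X : lmodType k) (phi : U -> V -> W -> k) (g : X -> U) v w :
  tri phi -> is_linear g -> lin (fun u => phi (g u) v w).
Proof. by move=> [h1 h2 h3] hg a x y; rewrite hg h1. Qed.
Lemma T_tri2 (U V W X : lmodType k) (phi : U -> V -> W -> k) (g : X -> V) u w :
  tri phi -> is_linear g -> lin (fun v => phi u (g v) w).
Proof. by move=> [h1 h2 h3] hg a x y; rewrite hg h2. Qed.
Lemma T_tri3 (U V W X : lmodType k) (phi : U -> V -> W -> k) (g : X -> W) u v :
  tri phi -> is_linear g -> lin (fun w => phi u v (g w)).
Proof. by move=> [h1 h2 h3] hg a x y; rewrite hg h3. Qed.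
Lemma T_bil1 (U V X : lmodType k) (F : U * V -> k) (g : X -> U) v :
  bil F -> is_linear g -> lin (fun u => F (g u, v)).
Proof. by move=> [h1 h2] hg a x y; rewrite hg h1. Qed.
Lemma T_bil2 (U V X : lmodType k) (F : U * V -> k) (g : X -> V) u :
  bil F -> is_linear g -> lin (fun v => F (u, g v)).
Proof. by move=> [h1 h2] hg a x y; rewrite hg h2. Qed.

Lemma V_id (U : lmodType k) : is_linear (fun u : U => u).
Proof. by []. Qed.

Lemma V_mull (A : algType k) (U : lmodType k) (g : U -> A) c :
  is_linear g -> is_linear (fun u => c * g u).
Proof. by move=> h a x y; rewrite h mulrDr scalerAr. Qed.

Lemma V_mulr (A : algType k) (U : lmodType k) (g : U -> A) c :
  is_linear g -> is_linear (fun u => g u * c).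
Proof. by move=> h a x y; rewrite h mulrDl scalerAl. Qed.

Lemma V_comp (U V W : lmodType k) (f : V -> W) (g : U -> V) :
  is_linear f -> is_linear g -> is_linear (fun x => f (g x)).
Proof. exact: is_linear_comp. Qed.

End Infra.

Lemma lin_counit (k : fieldType) (B : algType k) (hB : hopf_struct B) : lin (counit hB).
Proof. by case: hB => D e S [] /=. Qed.
Lemma lin_antipode (k : fieldType) (B : algType k) (hB : hopf_struct B) :
  is_linear (antipode hB).
Proof. by case: hB => D e S [] /=. Qed.
Lemma tlin_comul (k : fieldType) (B : algType k) (hB : hopf_struct B) : tlin (comul hB).
Proof. by case: hB => D e S [] /=. Qed.

Ltac vsolve :=
  first [ exact: V_id | assumption | exact: lin_antipode
        | apply: V_mull; vsolve | apply: V_mulr; vsolve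
        | apply: V_comp; [first [assumption | exact: lin_antipode] | vsolve] ].

Ltac lsolve :=
  cbn [fst snd];
  first [ assumption
        | exact: lin_counit
        | split; intros; lsolve
        | apply: T_sum; intros; lsolve
        | apply: T_tsum; [first [exact: tlin_comul | assumption] | lsolve | vsolve]
        | apply: T_mull; lsolve
        | apply: T_mulr; lsolve
        | match goal with H : trilinear_form _ |- _ =>
            first [apply: (T_tf1 _ _ H); vsolve | apply: (T_tf2 _ _ H); vsolve | apply: (T_tf3 _ _ H); vsolve] end
        | match goal with H : bilinear_form _ |- _ =>
            first [apply: (T_bf1 _ H); vsolve | apply: (T_bf2 _ H); vsolve] end
        | match goal with H : tri _ |- _ =>
            first [apply: (T_tri1 _ _ H); vsolve | apply: (T_tri2 _ _ H); vsolve | apply: (T_tri3 _ _ H); vsolve] end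
        | match goal with H : bil _ |- _ =>
            first [apply: (T_bil1 _ H); vsolve | apply: (T_bil2 _ H); vsolve] end
        | match goal with H : forall _ _, lin _ |- _ => apply: H end
        | apply: T_comp; [first [exact: lin_counit | assumption] | vsolve]
        ].

Section HopfLemmas.
Variables (k : fieldType) (B : algType k) (hB : hopf_struct B).
Local Notation D := (comul hB).
Local Notation e := (counit hB).
Local Notation S := (antipode hB).

Lemma coassocE (G : B -> B -> B -> k) x : tri G ->
  \sum_(p <- D x) \sum_(q <- D p.1) G q.1 q.2 p.2 =
  \sum_(p <- D x) \sum_(q <- D p.2) G p.1 q.1 q.2.
Proof.
move=> hG; have := teq3E (D_coassoc (hopf_ax hB) x) hG.
by rewrite !sum_sbind; under eq_bigr do rewrite big_map; under [RHS]eq_bigr do rewrite big_map.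
Qed.

Lemma counitLE (L : B -> k) x : lin L -> \sum_(p <- D x) e p.1 * L p.2 = L x.
Proof.
move=> hL; rewrite -{2}(e_counit_l (hopf_ax hB) x) (lin_sum _ _ hL).
by apply: eq_bigr => p _; rewrite (linZ _ _ hL).
Qed.

Lemma counitRE (L : B -> k) x : lin L -> \sum_(p <- D x) e p.2 * L p.1 = L x.
Proof.
move=> hL; rewrite -{2}(e_counit_r (hopf_ax hB) x) (lin_sum _ _ hL).
by apply: eq_bigr => p _; rewrite (linZ _ _ hL).
Qed.

Lemma antipLE (L : B -> k) x : lin L -> \sum_(p <- D x) L (S p.1 * p.2) = e x * L 1.
Proof.
by move=> hL; rewrite -(lin_sum _ _ hL) (S_antipode_l (hopf_ax hB)) (linZ _ _ hL).
Qed.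

Lemma antipRE (L : B -> k) x : lin L -> \sum_(p <- D x) L (p.1 * S p.2) = e x * L 1.
Proof.
by move=> hL; rewrite -(lin_sum _ _ hL) (S_antipode_r (hopf_ax hB)) (linZ _ _ hL).
Qed.

Lemma mulDE (F : B * B -> k) x y : bil F ->
  \sum_(p <- D (x * y)) F p = \sum_(p <- D x) \sum_(q <- D y) F (p.1 * q.1, p.2 * q.2).
Proof.
move=> hF; rewrite (teq2E (D_mul (hopf_ax hB) x y) hF) sum_sbind.
by under eq_bigr do rewrite big_map.
Qed.

Lemma oneDE (F : B * B -> k) : bil F -> \sum_(p <- D 1) F p = F (1, 1).
Proof. by move=> hF; rewrite (teq2E (D_one (hopf_ax hB)) hF) big_cons big_nil addr0. Qed.

Lemma e_mulE x y : e (x * y) = e x * e y.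
Proof. exact: (e_mul (hopf_ax hB)). Qed.
Lemma e_oneE : e 1 = 1.
Proof. exact: (e_one (hopf_ax hB)). Qed.

Lemma eSE x : e (S x) = e x.
Proof.
have he := lin_counit hB; have hS := lin_antipode hB.
rewrite -(counitRE (L := fun y => e (S y))); last by lsolve.
under eq_bigr do rewrite mulrC -e_mulE.
by rewrite (antipLE x he) e_oneE mulr1.
Qed.

End HopfLemmas.

Lemma hmapDE (k : fieldType) (A B : algType k) (hA : hopf_struct A) (hB : hopf_struct B)
  (g : A -> B) (F : B * B -> k) x :
  hopf_map hA hB g -> bil F ->
  \sum_(p <- comul hB (g x)) F p = \sum_(p <- comul hA x) F (g p.1, g p.2).
Proof. by case=> _ _ _ hD _ hF; rewrite (teq2E (hD x) hF) big_map. Qed.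

Lemma hmapSE (k : fieldType) (A : algType k) (hA : hopf_struct A)
  (g : A -> A) (F : A * A -> k) x :
  hopf_map hA hA g -> bil F ->
  \sum_(p <- comul hA x) F (antipode hA (g p.1), p.2) =
  \sum_(p <- comul hA x) F (g (antipode hA p.1), p.2).
Proof.
move=> hg hF; have hS := lin_antipode hA; have he := lin_counit hA.
case: (hg) => lg g1 gM gD ge.
transitivity (\sum_(p <- comul hA x) \sum_(q <- comul hA p.1) \sum_(r <- comul hA q.1)
   F (g (antipode hA r.1 * r.2) * antipode hA (g q.2), p.2)).
  apply: eq_bigr => p _.
  rewrite -(counitLE hA (L := fun y => F (antipode hA (g y), p.2))); last by lsolve.
  apply: eq_bigr => q _.
  rewrite (antipLE hA (L := fun y => F (g y * antipode hA (g q.2), p.2))); last by lsolve.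
  by rewrite g1 mul1r.
transitivity (\sum_(p <- comul hA x) \sum_(q <- comul hA p.1) \sum_(r <- comul hA q.2)
   F (g (antipode hA q.1) * (g r.1 * antipode hA (g r.2)), p.2)).
  apply: eq_bigr => p _.
  rewrite -(coassocE hA (G := fun a b c => F (g (antipode hA a) * (g b * antipode hA (g c)), p.2))); last by lsolve.
  by apply: eq_bigr => q _; apply: eq_bigr => r _; rewrite gM mulrA.
apply: eq_bigr => p _.
rewrite -(counitRE hA (L := fun y => F (g (antipode hA y), p.2))); last by lsolve.
apply: eq_bigr => q _.
rewrite -(hmapDE (F := fun r => F (g (antipode hA q.1) * (r.1 * antipode hA r.2), p.2)) _ hg); last by lsolve.
rewrite (antipRE hA (L := fun y => F (g (antipode hA q.1) * y, p.2))); last by lsolve.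
by rewrite ge mulr1.
Qed.

Section Brace.
Variables (k : fieldType) (A : algType k) (h h' : hopf_struct A).
Hypothesis hC : brace_compat h h'.
Local Notation D := (comul h).
Local Notation e := (counit h).
Local Notation S := (antipode h).
Local Notation D' := (comul h').
Local Notation e' := (counit h').
Local Notation T := (antipode h').

Lemma compatE (G : A -> A -> A -> k) x : tri G ->
  \sum_(p <- D' x) \sum_(q <- D p.2) G p.1 q.1 q.2 =
  \sum_(p <- D x) \sum_(q <- D p.2) \sum_(u <- D' p.1) \sum_(v <- D' q.2)
     G (u.1 * S q.1 * v.1) u.2 v.2.
Proof.
move=> hG.
transitivity (\sum_(p <- sbind (D' x) (fun p => [seq (p.1, q.1, q.2) | q <- D p.2]))
   G p.1.1 p.1.2 p.2).
  by rewrite sum_sbind; apply: eq_bigr => p _; rewrite big_map.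
rewrite (teq3E (hC x) hG) sum_sbind.
apply: eq_bigr => p _; rewrite sum_sbind; apply: eq_bigr => q _.
by rewrite sum_sbind; apply: eq_bigr => u _; rewrite big_map.
Qed.
Lemma compatE' (G : A -> A -> A -> k) x : tri G ->
  \sum_(p <- D' x) \sum_(q <- D p.2) G p.1 q.1 q.2 =
  \sum_(p <- D x) \sum_(q <- D p.2) \sum_(u <- D' p.1) \sum_(v <- D' q.2)
     G (u.1 * S q.1 * v.1) u.2 v.2.
Proof. exact: compatE. Qed.

Definition ff x := \sum_(u <- D' x) e u.1 * e u.2.

Lemma lin_ff : lin ff.
Proof. have he := lin_counit h; rewrite /ff; lsolve. Qed.

Lemma ff_conv x : ff x = \sum_(p <- D x) ff p.1 * ff p.2.
Proof.
have he := lin_counit h; have hS := lin_antipode h; have hf := lin_ff.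
have := compatE (G := fun a b c => e a * e b * e c) x; rewrite /=.
move=> H; transitivity (\sum_(p <- D' x) \sum_(q <- D p.2) e p.1 * e q.1 * e q.2).
  rewrite /ff; apply: eq_bigr => p _.
  rewrite -(counitLE h (L := e) p.2) // mulr_sumr.
  by apply: eq_bigr => q _; rewrite mulrA.
rewrite H; last by lsolve.
transitivity (\sum_(p <- D x) \sum_(q <- D p.2) ff p.1 * (e q.1 * ff q.2)).
  apply: eq_bigr => p _; apply: eq_bigr => q _.
  rewrite /ff mulr_suml; apply: eq_bigr => u _.
  rewrite !mulr_sumr; apply: eq_bigr => v _.
  by rewrite !e_mulE eSE; ring.
apply: eq_bigr => p _; rewrite -mulr_sumr; congr (_ * _).
exact: counitLE.
Qed.

Lemma ff_mul x y : ff (x * y) = ff x * ff y.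
Proof.
have he := lin_counit h.
rewrite /ff (mulDE h' (F := fun u => e u.1 * e u.2)); last by lsolve.
rewrite mulr_suml; apply: eq_bigr => p _; rewrite mulr_sumr; apply: eq_bigr => q _ /=.
by rewrite !e_mulE; ring.
Qed.

Lemma ff_one : ff 1 = 1.
Proof.
have he := lin_counit h.
by rewrite /ff (oneDE h' (F := fun u => e u.1 * e u.2)) /= ?e_oneE ?mulr1 //; lsolve.
Qed.

Lemma ff_e x : ff x = e x.
Proof.
have he := lin_counit h; have hS := lin_antipode h; have hf := lin_ff.
have E1 : e x = \sum_(p <- D x) ff p.1 * ff (S p.2).
  rewrite -[LHS]mulr1 -ff_one -(antipRE h (L := ff)) //.
  by apply: eq_bigr => p _; rewrite ff_mul.
symmetry; rewrite E1.
transitivity (\sum_(p <- D x) \sum_(q <- D p.1) ff q.1 * ff q.2 * ff (S p.2)).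
  by apply: eq_bigr => p _; rewrite [ff p.1]ff_conv mulr_suml.
rewrite (coassocE h (G := fun a b c => ff a * ff b * ff (S c))); last by rewrite /ff; lsolve.
rewrite -(counitRE h (L := ff) x) //.
apply: eq_bigr => p _; rewrite [RHS]mulrC.
have -> : e p.2 = \sum_(q <- D p.2) ff q.1 * ff (S q.2).
  rewrite -[LHS]mulr1 -ff_one -(antipRE h (L := ff)) //.
  by apply: eq_bigr => q _; rewrite ff_mul.
by rewrite mulr_sumr; apply: eq_bigr => q _; rewrite mulrA.
Qed.

Lemma eps_eq x : e' x = e x.
Proof.
have he := lin_counit h; have hT := lin_antipode h'; have hf := lin_ff.
have E1 : forall y, e' y = \sum_(u <- D' y) e u.1 * e (T u.2).
  move=> y; rewrite -[LHS]mulr1 -(e_oneE h) -(antipRE h' (L := e) y) //.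
  by apply: eq_bigr => u _; rewrite e_mulE.
rewrite E1.
transitivity (\sum_(u <- D' x) \sum_(w <- D' u.1) e w.1 * e w.2 * e (T u.2)).
  by apply: eq_bigr => u _; rewrite -ff_e /ff mulr_suml.
rewrite (coassocE h' (G := fun a b c => e a * e b * e (T c))); last by lsolve.
rewrite -(counitRE h' (L := e) x) //.
apply: eq_bigr => u _; rewrite mulrC E1 mulr_sumr.
by apply: eq_bigr => w _; rewrite mulrA.
Qed.

End Brace.

Lemma sum_sbindV (V : nmodType) (T U : Type) (s : seq T) (f : T -> seq U) (F : U -> V) :
  \sum_(p <- sbind s f) F p = \sum_(p <- s) \sum_(q <- f p) F q.
Proof.
rewrite /sbind; elim: s => [|x s IH] /=; first by rewrite !big_nil.
by rewrite big_cat big_cons IH.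
Qed.

Section Brace2.
Variables (k : fieldType) (A : algType k) (h h' : hopf_struct A).
Hypothesis hC : brace_compat h h'.
Local Notation D := (comul h).
Local Notation e := (counit h).
Local Notation S := (antipode h).
Local Notation D' := (comul h').
Local Notation e' := (counit h').
Local Notation T := (antipode h').

Definition rhoB x := sbind (D x) (fun p => [seq (S p.1 * u.1, u.2) | u <- D' p.2]).

Lemma rhoBE (V : nmodType) (F : A * A -> V) x :
  \sum_(w <- rhoB x) F w = \sum_(p <- D x) \sum_(u <- D' p.2) F (S p.1 * u.1, u.2).
Proof. by rewrite sum_sbindV; apply: eq_bigr => p _; rewrite big_map. Qed.

Lemma tlin_rhoB : tlin rhoB.
Proof.
have hS := lin_antipode h.
move=> a x y; apply: teq2I => F hF; rewrite big_cat big_map.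
have -> : \sum_(w <- rhoB x) F (a *: w.1, w.2) = a * \sum_(w <- rhoB x) F w.
  by rewrite mulr_sumr; apply: eq_bigr => -[u v] _; rewrite /= (linZ _ _ (hF.1 v)).
rewrite !rhoBE.
apply: (lin_tsum (tlin_comul h) (F := fun p => \sum_(u <- D' p.2) F (S p.1 * u.1, u.2))).
lsolve.
Qed.

Lemma cocycleE x :
  teq2 (D' x) (sbind (D x) (fun p => [seq (p.1 * u.1, u.2) | u <- rhoB p.2])).
Proof.
have hS := lin_antipode h.
apply: teq2I => F hF; rewrite sum_sbind.
under [RHS]eq_bigr => p _ do rewrite big_map rhoBE.
transitivity (\sum_(p <- D x) \sum_(q <- D p.2)
   (fun a b c => \sum_(u <- D' c) F (a * S b * u.1, u.2)) p.1 q.1 q.2); last first.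
  by apply: eq_bigr => p _; apply: eq_bigr => q _; apply: eq_bigr => u _; rewrite mulrA.
rewrite -(coassocE h (G := fun a b c => \sum_(u <- D' c) F (a * S b * u.1, u.2))) /=; last by lsolve.
transitivity (\sum_(p <- D x) e p.1 * \sum_(u <- D' p.2) F (1 * u.1, u.2)); last first.
  apply: eq_bigr => p _.
  by rewrite (antipRE h (L := fun z => \sum_(u <- D' p.2) F (z * u.1, u.2))) /=; last by lsolve.
rewrite (counitLE h (L := fun y => \sum_(u <- D' y) F (1 * u.1, u.2))); last by lsolve.
by rewrite -(sum_pair _ F); apply: eq_bigr => u _; rewrite mul1r.
Qed.

Lemma rho_counit x : \sum_(w <- rhoB x) e' w.1 *: w.2 = x.
Proof.
rewrite rhoBE.
under eq_bigr => p _ do under eq_bigr => u _ do rewrite /= e_mulE -scalerA.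
under eq_bigr => p _ do rewrite -scaler_sumr (e_counit_l (hopf_ax h')) (eps_eq hC) eSE.
exact: (e_counit_l (hopf_ax h)).
Qed.

Lemma rho_counit2 x : \sum_(w <- rhoB x) e w.2 *: w.1 = (e x)%:A.
Proof.
rewrite rhoBE.
under eq_bigr => p _ do under eq_bigr => u _ do rewrite /= -(eps_eq hC) scalerAr.
under eq_bigr => p _ do rewrite -mulr_sumr (e_counit_r (hopf_ax h')).
exact: (S_antipode_l (hopf_ax h)).
Qed.


Lemma rho_coalg x :
  teq3 (sbind (rhoB x) (fun p => [seq (p.1, q.1, q.2) | q <- D p.2]))
       (sbind (D x) (fun p => sbind (rhoB p.1) (fun u =>
           [seq (u.1 * v.1, u.2, v.2) | v <- rhoB p.2]))).
Proof.
have hS := lin_antipode h.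
apply: teq3I => G hG; rewrite !sum_sbind.
transitivity (\sum_(p <- D x) \sum_(q <- D p.2) \sum_(u <- D' q.1) \sum_(r <- D q.2)
   \sum_(v <- D' r.2) G (S p.1 * u.1 * (S r.1 * v.1)) u.2 v.2).
  apply: eq_bigr => p _.
  rewrite big_map; under eq_bigr => j _ do rewrite big_map /=.
  rewrite (compatE hC (G := fun a b c => G (S p.1 * a) b c)) /=; last by lsolve.
  apply: eq_bigr => q _; rewrite exchange_big.
  apply: eq_bigr => u _; apply: eq_bigr => r _; apply: eq_bigr => v _.
  by rewrite !mulrA.
symmetry.
under eq_bigr => p _ do rewrite sum_sbind.
under eq_bigr => p _ do under eq_bigr => w _ do rewrite big_map /=.
under eq_bigr => p _ do rewrite (rhoBE (fun w1 => \sum_(w2 <- rhoB p.2) G (w1.1 * w2.1) w1.2 w2.2)) /=.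
under eq_bigr => p _ do under eq_bigr => q _ do under eq_bigr => u _ do rewrite rhoBE /=.
rewrite (coassocE h (G := fun a b c => \sum_(u <- D' b) \sum_(r <- D c) \sum_(v <- D' r.2)
    G (S a * u.1 * (S r.1 * v.1)) u.2 v.2)) //; lsolve.
Qed.

End Brace2.

Section Brace3.
Variables (k : fieldType) (A : algType k) (h h' : hopf_struct A).
Hypothesis hC : brace_compat h h'.
Local Notation D := (comul h).
Local Notation e := (counit h).
Local Notation S := (antipode h).
Local Notation D' := (comul h').
Local Notation e' := (counit h').
Local Notation T := (antipode h').
Local Notation rho := (rhoB h h').

Local Notation twist phi s := (fun a b c => phi (s.1 * a) (s.2 * b) c).

Section Cancel.
Variable Z : (A -> A -> A -> k) -> A -> k.
Hypothesis Z1 : forall phi, tri phi -> lin (Z phi).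
Hypothesis Z2 : forall phi b, tri phi -> bil (fun s => Z (twist phi s) b).

Lemma Z_e phi y b : tri phi -> e y * Z phi b =
  \sum_(q <- D y) \sum_(t <- D' (S q.1)) \sum_(s <- D' q.2)
     Z (twist phi (t.1 * s.1, t.2 * s.2)) b.
Proof.
move=> hphi; have hB := Z2 b hphi.
have E0 : Z phi b = \sum_(s <- D' 1) Z (twist phi s) b.
  rewrite (oneDE h' (F := fun s => Z (twist phi s) b)) //=.
  congr (Z _ b); do 3 apply: functional_extensionality => ?.
  by rewrite !mul1r.
have hL := lin_tsum (tlin_comul h') hB.
rewrite E0 -(linZ _ _ hL) -(S_antipode_l (hopf_ax h) y) (lin_sum _ _ hL).
apply: eq_bigr => q _.
by rewrite (mulDE h' (F := fun s => Z (twist phi s) b)).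
Qed.

Lemma cancelZ phi a : tri phi -> Z phi a =
  \sum_(p <- D a) \sum_(t <- D' (S p.1)) \sum_(q <- D p.2) \sum_(s <- D' q.1)
     Z (twist (twist phi t) s) q.2.
Proof.
move=> hphi; have hS := lin_antipode h.
have hZ1 : forall u v, lin (Z (fun a b c => phi (u * a) (v * b) c)).
  by move=> u v; apply: Z1; lsolve.
rewrite -(counitLE h (L := Z phi) a); last exact: Z1.
under eq_bigr => p _ do rewrite Z_e //.
rewrite (coassocE h (G := fun a1 a2 a3 => \sum_(t <- D' (S a1)) \sum_(s <- D' a2)
     Z (twist phi (t.1 * s.1, t.2 * s.2)) a3)); last first.
  split=> [a2 a3|a1 a3|a1 a2].
  - have hB := Z2 a3 hphi; lsolve.
  - have hB := Z2 a3 hphi; lsolve.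
  - lsolve.
apply: eq_bigr => p _; rewrite exchange_big /=.
apply: eq_bigr => t _; apply: eq_bigr => q _; apply: eq_bigr => s _.
congr (Z _ _); do 3 apply: functional_extensionality => ?.
by rewrite !mulrA.
Qed.

End Cancel.


Definition Xf (phi : A -> A -> A -> k) a := \sum_(w <- rho a) \sum_(q <- D' w.1) phi q.1 q.2 w.2.
Definition Yf (phi : A -> A -> A -> k) a := \sum_(w <- rho a) \sum_(z <- rho w.2) phi w.1 z.1 z.2.

Lemma tri_twist (phi : A -> A -> A -> k) (s : A * A) : tri phi -> tri (twist phi s).
Proof. by move=> hphi; lsolve. Qed.

Lemma X1 (phi : A -> A -> A -> k) : tri phi -> lin (Xf phi).
Proof. have trho := tlin_rhoB h h'; move=> hphi; rewrite /Xf; lsolve. Qed.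
Lemma X2 (phi : A -> A -> A -> k) b : tri phi -> bil (fun s => Xf (twist phi s) b).
Proof. have trho := tlin_rhoB h h'; move=> hphi; rewrite /Xf; lsolve. Qed.
Lemma Y1 (phi : A -> A -> A -> k) : tri phi -> lin (Yf phi).
Proof. have trho := tlin_rhoB h h'; move=> hphi; rewrite /Yf; lsolve. Qed.
Lemma Y2 (phi : A -> A -> A -> k) b : tri phi -> bil (fun s => Yf (twist phi s) b).
Proof. have trho := tlin_rhoB h h'; move=> hphi; rewrite /Yf; lsolve. Qed.

Lemma rho_coalgE (G : A -> A -> A -> k) x : tri G ->
  \sum_(w <- rho x) \sum_(q <- D w.2) G w.1 q.1 q.2 =
  \sum_(m <- D x) \sum_(w1 <- rho m.1) \sum_(w2 <- rho m.2) G (w1.1 * w2.1) w1.2 w2.2.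
Proof.
move=> hG.
transitivity (\sum_(t <- sbind (rho x) (fun p => [seq (p.1, q.1, q.2) | q <- D p.2]))
   G t.1.1 t.1.2 t.2).
  by rewrite (sum_sbind (rho x)); apply: eq_bigr => w _; rewrite big_map.
rewrite (teq3E (rho_coalg hC x) hG) (sum_sbind (D x)); apply: eq_bigr => m _.
by rewrite (sum_sbind (rho m.1)); apply: eq_bigr => w _; rewrite big_map.
Qed.

Lemma XY_star (phi : A -> A -> A -> k) a : tri phi ->
  \sum_(p <- D a) \sum_(s <- D' p.1) Xf (twist phi s) p.2 =
  \sum_(p <- D a) \sum_(s <- D' p.1) Yf (twist phi s) p.2.
Proof.
move=> hphi; have trho := tlin_rhoB h h'.
have E := coassocE h' (G := phi) a hphi.
transitivity (\sum_(u <- D' a) \sum_(q <- D' u.1) phi q.1 q.2 u.2).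
  symmetry.
  rewrite (teq2E (cocycleE h h' a) (F := fun u => \sum_(q <- D' u.1) phi q.1 q.2 u.2)); last by lsolve.
  rewrite sum_sbind; apply: eq_bigr => p _; rewrite big_map /=.
  transitivity (\sum_(w <- rho p.2) \sum_(s <- D' p.1) \sum_(t <- D' w.1)
      phi (s.1 * t.1) (s.2 * t.2) w.2).
    apply: eq_bigr => w _.
    by rewrite (mulDE h' (F := fun q => phi q.1 q.2 w.2)) //; lsolve.
  by rewrite exchange_big.
rewrite E.
rewrite (teq2E (cocycleE h h' a) (F := fun u => \sum_(q <- D' u.2) phi u.1 q.1 q.2)); last by lsolve.
rewrite sum_sbind.
transitivity (\sum_(p <- D a) \sum_(w <- rho p.2) \sum_(r <- D w.2) \sum_(z <- rho r.2)
   phi (p.1 * w.1) (r.1 * z.1) z.2).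
  apply: eq_bigr => p _; rewrite big_map; apply: eq_bigr => w _.
  rewrite (teq2E (cocycleE h h' w.2) (F := fun v => phi (p.1 * w.1) v.1 v.2)); last by lsolve.
  by rewrite sum_sbind; apply: eq_bigr => r _; rewrite big_map.
transitivity (\sum_(p <- D a) \sum_(m <- D p.2) \sum_(w1 <- rho m.1) \sum_(w2 <- rho m.2)
   \sum_(z <- rho w2.2) phi (p.1 * (w1.1 * w2.1)) (w1.2 * z.1) z.2).
  apply: eq_bigr => p _.
  by rewrite (rho_coalgE (G := fun al be ga => \sum_(z <- rho ga) phi (p.1 * al) (be * z.1) z.2)) //; lsolve.
transitivity (\sum_(p <- D a) \sum_(m <- D p.1)
   (fun a1 a2 a3 => \sum_(w1 <- rho a2) \sum_(w2 <- rho a3) \sum_(z <- rho w2.2)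
        phi (a1 * w1.1 * w2.1) (w1.2 * z.1) z.2) m.1 m.2 p.2).
  rewrite (coassocE h (G := fun a1 a2 a3 => \sum_(w1 <- rho a2) \sum_(w2 <- rho a3)
     \sum_(z <- rho w2.2) phi (a1 * w1.1 * w2.1) (w1.2 * z.1) z.2)); last by lsolve.
  apply: eq_bigr => p _; apply: eq_bigr => m _; apply: eq_bigr => w1 _.
  apply: eq_bigr => w2 _; apply: eq_bigr => z _; by rewrite mulrA.
apply: eq_bigr => p _.
rewrite (teq2E (cocycleE h h' p.1) (F := fun s => Yf (twist phi s) p.2)); last first.
  by have := Y2 p.2 hphi.
rewrite sum_sbind; apply: eq_bigr => m _; rewrite big_map; apply: eq_bigr => w1 _.
by [].
Qed.

Lemma rho_coassoc x :
  teq3 (sbind (rho x) (fun p => [seq (q.1, q.2, p.2) | q <- D' p.1]))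
       (sbind (rho x) (fun p => [seq (p.1, q.1, q.2) | q <- rho p.2])).
Proof.
apply: teq3I => phi hphi.
transitivity (Xf phi x).
  by rewrite /Xf (sum_sbind (rho x)); apply: eq_bigr => w _; rewrite big_map.
transitivity (Yf phi x); last first.
  by rewrite /Yf (sum_sbind (rho x)); apply: eq_bigr => w _; rewrite big_map.
rewrite (cancelZ X1 X2 x hphi) (cancelZ Y1 Y2 x hphi).
apply: eq_bigr => p _; apply: eq_bigr => t _.
exact: (XY_star p.2 (tri_twist t hphi)).
Qed.

End Brace3.

Section Transp.
Variables (k : fieldType) (A B : algType k) (hB : hopf_struct B) (pi : A -> B) (pinv : B -> A).
Hypotheses (pil : is_linear pi) (pi1 : pi 1 = 1) (piM : forall x y, pi (x * y) = pi x * pi y)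
  (can1 : cancel pi pinv) (can2 : cancel pinv pi).
Local Notation D := (comul hB).
Local Notation e := (counit hB).
Local Notation S := (antipode hB).

Lemma pinvl : is_linear pinv.
Proof. by move=> a x y; apply: (can_inj can1); rewrite pil !can2. Qed.
Lemma pinv1 : pinv 1 = 1.
Proof. by rewrite -pi1 can1. Qed.
Lemma pinvM x y : pinv (x * y) = pinv x * pinv y.
Proof. by apply: (can_inj can1); rewrite piM !can2. Qed.

Definition tD a := [seq (pinv p.1, pinv p.2) | p <- D (pi a)].
Definition te a := e (pi a).
Definition tS a := pinv (S (pi a)).

Lemma tDE (F : A * A -> k) a : \sum_(p <- tD a) F p = \sum_(p <- D (pi a)) F (pinv p.1, pinv p.2).
Proof. by rewrite big_map. Qed.

Lemma transp_ax : hopf_axioms tD te tS.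
Proof.
have hpinv := pinvl; have he := lin_counit hB; have hS := lin_antipode hB.
split.
- move=> a x y; apply: teq2I => F hF; rewrite big_cat !big_map pil.
  rewrite (lin_tsum (tlin_comul hB) (F := fun p => F (pinv p.1, pinv p.2))); last by lsolve.
  congr (_ + _); rewrite mulr_sumr; apply: eq_bigr => p _ /=.
  by rewrite (linZ _ _ (hF.1 _)).
- by move=> a x y; rewrite /te pil he.
- by move=> a x y; rewrite /tS pil hS hpinv.
- move=> x; apply: teq3I => G hG; rewrite !sum_sbind !big_map.
  transitivity (\sum_(p <- D (pi x)) \sum_(q <- D p.1)
     (fun a b c => G (pinv a) (pinv b) (pinv c)) q.1 q.2 p.2).
    by apply: eq_bigr => p _; rewrite big_map /= tDE can2.
  rewrite (coassocE hB (G := fun a b c => G (pinv a) (pinv b) (pinv c))); last by lsolve.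
  by apply: eq_bigr => p _; rewrite big_map /= tDE can2.
- move=> x; rewrite big_map -{2}(can1 x) -[in RHS](e_counit_l (hopf_ax hB) (pi x)) (vlin_sum _ _ hpinv).
  by apply: eq_bigr => p _; rewrite /te /= can2 (vlinZ _ _ hpinv).
- move=> x; rewrite big_map -{2}(can1 x) -[in RHS](e_counit_r (hopf_ax hB) (pi x)) (vlin_sum _ _ hpinv).
  by apply: eq_bigr => p _; rewrite /te /= can2 (vlinZ _ _ hpinv).
- move=> x y; apply: teq2I => F hF; rewrite tDE piM.
  rewrite (mulDE hB (F := fun p => F (pinv p.1, pinv p.2))); last by lsolve.
  rewrite sum_sbind !big_map; apply: eq_bigr => p _; rewrite big_map tDE.
  by apply: eq_bigr => q _; rewrite /= !pinvM.
- apply: teq2I => F hF; rewrite tDE pi1.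
  rewrite (oneDE hB (F := fun p => F (pinv p.1, pinv p.2))); last by lsolve.
  by rewrite big_cons big_nil addr0 /= pinv1.
- by move=> x y; rewrite /te piM e_mulE.
- by rewrite /te pi1 e_oneE.
- move=> x; rewrite big_map.
  transitivity (pinv (\sum_(p <- D (pi x)) S p.1 * p.2)).
    by rewrite (vlin_sum _ _ hpinv); apply: eq_bigr => p _; rewrite /tS /= can2 pinvM.
  by rewrite (S_antipode_l (hopf_ax hB)) (vlinZ _ _ hpinv) pinv1.
- move=> x; rewrite big_map.
  transitivity (pinv (\sum_(p <- D (pi x)) p.1 * S p.2)).
    by rewrite (vlin_sum _ _ hpinv); apply: eq_bigr => p _; rewrite /tS /= can2 pinvM.
  by rewrite (S_antipode_r (hopf_ax hB)) (vlinZ _ _ hpinv) pinv1.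
Qed.

Definition transp : hopf_struct A := HopfStruct transp_ax.

End Transp.

Section GC.
Variables (k : fieldType) (A : algType k) (h : hopf_struct A) (H : hopfAlg k)
  (rho : A -> seq (H * A)) (pi : A -> H) (pinv : H -> A).
Hypotheses (hcom : comod_coalg h rho)
  (coc : forall x, teq2 (comul (hstruct H) (pi x))
                      (sbind (comul h x) (fun p => [seq (pi p.1 * u.1, pi u.2) | u <- rho p.2])))
  (pil : is_linear pi) (pi1 : pi 1 = 1) (piM : forall x y, pi (x * y) = pi x * pi y)
  (can1 : cancel pi pinv) (can2 : cancel pinv pi).
Local Notation D := (comul h).
Local Notation e := (counit h).
Local Notation S := (antipode h).
Local Notation hH := (transp (hstruct H) pil pi1 piM can1 can2).

Lemma rho_tlin : tlin rho.
Proof. by case: hcom. Qed.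

Lemma comodE (G : H -> A -> A -> k) y : tri G ->
  \sum_(w <- rho y) \sum_(q <- D w.2) G w.1 q.1 q.2 =
  \sum_(m <- D y) \sum_(u <- rho m.1) \sum_(v <- rho m.2) G (u.1 * v.1) u.2 v.2.
Proof.
move=> hG; case: hcom => _ _ _ hc _.
transitivity (\sum_(t <- sbind (rho y) (fun p => [seq (p.1, q.1, q.2) | q <- D p.2]))
   G t.1.1 t.1.2 t.2).
  by rewrite (sum_sbind (rho y)); apply: eq_bigr => w _; rewrite big_map.
rewrite (teq3E (hc y) hG) (sum_sbind (D y)); apply: eq_bigr => m _.
by rewrite (sum_sbind (rho m.1)); apply: eq_bigr => w _; rewrite big_map.
Qed.

Lemma DpE (F : A * A -> k) a : bil F ->
  \sum_(s <- comul hH a) F s = \sum_(p <- D a) \sum_(u <- rho p.2) F (p.1 * pinv u.1, u.2).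
Proof.
move=> hF; have hpinv := pinvl pil can1 can2.
rewrite /= tDE (teq2E (coc a) (F := fun p => F (pinv p.1, pinv p.2))); last by lsolve.
rewrite sum_sbind; apply: eq_bigr => p _; rewrite big_map.
by apply: eq_bigr => u _; rewrite /= (pinvM piM can1 can2) !can1.
Qed.


Lemma G_compat : brace_compat h hH.
Proof.
have hpinv := pinvl pil can1 can2; have hS := lin_antipode h; have trho := rho_tlin.
have pM := pinvM piM can1 can2.
move=> x; apply: teq3I => phi hphi.
transitivity (\sum_(p <- D x) \sum_(r <- D p.2) \sum_(u <- rho r.1) \sum_(v <- rho r.2)
   phi (p.1 * pinv u.1 * pinv v.1) u.2 v.2).
  rewrite sum_sbind; under eq_bigr => s _ do rewrite big_map /=.
  rewrite (DpE (F := fun s => \sum_(q <- D s.2) phi s.1 q.1 q.2)); last by lsolve.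
  apply: eq_bigr => p _.
  rewrite (comodE (G := fun al be ga => phi (p.1 * pinv al) be ga)); last by lsolve.
  apply: eq_bigr => r _; apply: eq_bigr => u _; apply: eq_bigr => v _.
  by rewrite pM mulrA.
symmetry.
transitivity (\sum_(p <- D x) \sum_(p' <- D p.1) \sum_(u <- rho p'.2) \sum_(v <- rho p.2)
      phi (p'.1 * pinv u.1 * 1 * pinv v.1) u.2 v.2); last first.
  rewrite (coassocE h (G := fun a1 a2 a3 => \sum_(u <- rho a2) \sum_(v <- rho a3)
      phi (a1 * pinv u.1 * 1 * pinv v.1) u.2 v.2)); last by lsolve.
  apply: eq_bigr => p _; apply: eq_bigr => r _; apply: eq_bigr => u _; apply: eq_bigr => v _.
  by rewrite mulr1.
rewrite sum_sbind; apply: eq_bigr => p _; rewrite sum_sbind.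
transitivity (\sum_(q <- D p.2) \sum_(q' <- D q.2) 
   (fun a3 a4 a5 => \sum_(p' <- D p.1) \sum_(u <- rho p'.2) \sum_(v <- rho a5)
      phi (p'.1 * pinv u.1 * (S a3 * a4) * pinv v.1) u.2 v.2) q.1 q'.1 q'.2).
  apply: eq_bigr => q _; rewrite sum_sbind.
  under eq_bigr => s _ do rewrite big_map /=.
  rewrite (DpE (F := fun s => \sum_(t <- comul hH q.2) phi (s.1 * S q.1 * t.1) s.2 t.2)); last by lsolve.
  transitivity (\sum_(p' <- D p.1) \sum_(u <- rho p'.2) \sum_(q' <- D q.2) \sum_(v <- rho q'.2)
      phi (p'.1 * pinv u.1 * (S q.1 * q'.1) * pinv v.1) u.2 v.2).
    apply: eq_bigr => p' _; apply: eq_bigr => u _.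
    rewrite (DpE (F := fun t => phi (p'.1 * pinv u.1 * S q.1 * t.1) u.2 t.2)); last by lsolve.
    by apply: eq_bigr => q' _; apply: eq_bigr => v _; rewrite !mulrA.
  under eq_bigr => p' _ do rewrite exchange_big.
  by rewrite exchange_big.
rewrite -(coassocE h (G := fun a3 a4 a5 => \sum_(p' <- D p.1) \sum_(u <- rho p'.2) \sum_(v <- rho a5)
      phi (p'.1 * pinv u.1 * (S a3 * a4) * pinv v.1) u.2 v.2)); last by lsolve.
transitivity (\sum_(q <- D p.2) e q.1 * (\sum_(p' <- D p.1) \sum_(u <- rho p'.2) \sum_(v <- rho q.2)
      phi (p'.1 * pinv u.1 * 1 * pinv v.1) u.2 v.2)).
  apply: eq_bigr => q _.
  rewrite (antipLE h (L := fun z => \sum_(p' <- D p.1) \sum_(u <- rho p'.2) \sum_(v <- rho q.2)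
      phi (p'.1 * pinv u.1 * z * pinv v.1) u.2 v.2)) //; lsolve.
rewrite (counitLE h (L := fun y => \sum_(p' <- D p.1) \sum_(u <- rho p'.2) \sum_(v <- rho y)
      phi (p'.1 * pinv u.1 * 1 * pinv v.1) u.2 v.2)); last by lsolve.
done.
Qed.


Lemma rho_back x : teq2 (rho x) [seq (pi p.1, p.2) | p <- rhoB h hH x].
Proof.
have hpinv := pinvl pil can1 can2; have hS := lin_antipode h; have trho := rho_tlin.
apply: teq2I => F hF; rewrite big_map (rhoBE h hH (fun w => F (pi w.1, w.2))) /=.
symmetry.
transitivity (\sum_(p <- D x) \sum_(q <- D p.2) \sum_(v <- rho q.2)
    F (pi (S p.1 * q.1) * v.1, v.2)).
  apply: eq_bigr => p _.
  rewrite (DpE (F := fun u => F (pi (S p.1 * u.1), u.2))); last by lsolve.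
  by apply: eq_bigr => q _; apply: eq_bigr => v _; rewrite /= !piM can2 mulrA.
rewrite -(coassocE h (G := fun a1 a2 a3 => \sum_(v <- rho a3) F (pi (S a1 * a2) * v.1, v.2))); last by lsolve.
transitivity (\sum_(p <- D x) e p.1 * \sum_(v <- rho p.2) F (pi 1 * v.1, v.2)).
  apply: eq_bigr => p _.
  by rewrite (antipLE h (L := fun z => \sum_(v <- rho p.2) F (pi z * v.1, v.2))) //; lsolve.
rewrite (counitLE h (L := fun y => \sum_(v <- rho y) F (pi 1 * v.1, v.2))); last by lsolve.
by rewrite pi1 -(sum_pair _ F); apply: eq_bigr => v _; rewrite mul1r.
Qed.

Lemma pi_hmap : hopf_map hH (hstruct H) pi.
Proof.
split=> // x; first (apply: teq2I => F hF; rewrite big_map /= tDE -(sum_pair _ F)).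
by apply: eq_bigr => p _; rewrite /= !can2.
Qed.

Lemma pinv_hmap : hopf_map (hstruct H) hH pinv.
Proof.
split.
- exact: (pinvl pil can1 can2).
- exact: (pinv1 pi1 can1).
- exact: (pinvM piM can1 can2).
- by move=> y; rewrite /= /tD can2; apply: teq2_refl.
- by move=> y; rewrite /= /te can2.
Qed.

End GC.

Lemma bij_ex (T U : Type) (f : T -> U) : bijective f -> exists g, cancel f g /\ cancel g f.
Proof. by case=> g h1 h2; exists g. Qed.
Definition inv_of (T U : Type) (f : T -> U) (hb : bijective f) : U -> T :=
  proj1_sig (constructive_indefinite_description _ (bij_ex hb)).
Lemma inv_of1 (T U : Type) (f : T -> U) (hb : bijective f) : cancel f (inv_of hb).
Proof. by rewrite /inv_of; case: constructive_indefinite_description => g []. Qed.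
Lemma inv_of2 (T U : Type) (f : T -> U) (hb : bijective f) : cancel (inv_of hb) f.
Proof. by rewrite /inv_of; case: constructive_indefinite_description => g []. Qed.

Lemma teq2_sym (k : fieldType) (U V : lmodType k) (s t : seq (U * V)) : teq2 s t -> teq2 t s.
Proof. by move=> h phi hphi; rewrite h. Qed.

Section Main.
Variables (k : fieldType) (A : algType k) (h : hopf_struct A).
Local Notation D := (comul h).
Local Notation S := (antipode h).

Lemma F_comod (B : hopf_brace_on h) :
  comod_coalg (H := HopfAlg (hb_second B)) h (rhoB h (hb_second B)).
Proof.
have hC := hb_compat B.
split.
- exact: tlin_rhoB.
- exact: rho_coassoc.
- exact: rho_counit.
- exact: rho_coalg.
- exact: rho_counit2.
Qed.

Lemma F_cocycle (B : hopf_brace_on h) :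
  bij_cocycle (H := HopfAlg (hb_second B)) h (rhoB h (hb_second B)) (fun x => x).
Proof.
split=> //.
- by exists (fun x => x).
- exact: cocycleE.
Qed.

Definition Fobj (B : hopf_brace_on h) : cocycle_on h :=
  @CocycleOn k A h (HopfAlg (hb_second B)) (rhoB h (hb_second B)) (fun x => x)
    (F_comod B) (F_cocycle B).

Lemma F_rho_hom (h1 h2 : hopf_struct A) (f : A -> A) x :
  hopf_map h h f -> hopf_map h1 h2 f ->
  teq2 (rhoB h h2 (f x)) [seq (f p.1, f p.2) | p <- rhoB h h1 x].
Proof.
move=> hf hf'; have hS := lin_antipode h.
case: (hf) => lf f1 fM _ _.
apply: teq2I => F hF.
rewrite big_map (rhoBE h h1 (fun w => F (f w.1, f w.2))) rhoBE.
rewrite (hmapDE (F := fun p => \sum_(u <- comul h2 p.2) F (S p.1 * u.1, u.2)) _ hf); last by lsolve.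
transitivity (\sum_(p <- D x) \sum_(u <- comul h1 p.2) F (S (f p.1) * f u.1, f u.2)).
  apply: eq_bigr => p _.
  by rewrite (hmapDE (F := fun u => F (S (f p.1) * u.1, u.2)) _ hf'); last by lsolve.
rewrite (hmapSE (F := fun q => \sum_(u <- comul h1 q.2) F (q.1 * f u.1, f u.2)) _ hf); last by lsolve.
by apply: eq_bigr => p _; apply: eq_bigr => u _; rewrite /= fM.
Qed.

Lemma F_hom_prop (B1 B2 : hopf_brace_on h) (f : cb_hom B1 B2) :
  cc_hom_prop (E := Fobj B1) (P := Fobj B2) (proj1_sig f, proj1_sig f).
Proof.
case: f => f [hf hf'] /=; split=> //.
by move=> x; apply: F_rho_hom.
Qed.

Definition Fmap (B1 B2 : hopf_brace_on h) (f : cb_hom B1 B2) : cc_hom (Fobj B1) (Fobj B2) :=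
  exist _ _ (F_hom_prop f).

Definition Ffun : functor (CB h) (CC h).
Proof.
refine (@Functor (CB h) (CC h) Fobj Fmap _ _).
- by move=> x; apply: sig_eq_val.
- by move=> x y z f g; apply: sig_eq_val.
Defined.


Lemma cc_lin (E : cocycle_on h) : is_linear (cc_pi E).
Proof. by case: (cc_cocycle E). Qed.
Lemma cc_one (E : cocycle_on h) : cc_pi E 1 = 1.
Proof. by case: (cc_cocycle E). Qed.
Lemma cc_mul (E : cocycle_on h) : forall x y, cc_pi E (x * y) = cc_pi E x * cc_pi E y.
Proof. by case: (cc_cocycle E). Qed.
Lemma cc_bij (E : cocycle_on h) : bijective (cc_pi E).
Proof. by case: (cc_cocycle E). Qed.
Lemma cc_coc (E : cocycle_on h) : forall x, teq2 (comul (hstruct (cc_H E)) (cc_pi E x))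
   (sbind (D x) (fun p => [seq (cc_pi E p.1 * u.1, cc_pi E u.2) | u <- cc_rho E p.2])).
Proof. by case: (cc_cocycle E). Qed.

Definition ccinv (E : cocycle_on h) := inv_of (cc_bij E).

Definition Gstruct (E : cocycle_on h) : hopf_struct A :=
  transp (hstruct (cc_H E)) (cc_lin E) (cc_one E) (@cc_mul E)
    (inv_of1 (cc_bij E)) (inv_of2 (cc_bij E)).

Definition Gobj (E : cocycle_on h) : hopf_brace_on h :=
  @HopfBraceOn k A h (Gstruct E)
    (G_compat (cc_comod E) (@cc_coc E) (cc_lin E) (cc_one E) (@cc_mul E)
       (inv_of1 (cc_bij E)) (inv_of2 (cc_bij E))).

Lemma G_hom (E P : cocycle_on h) (fg : cc_hom E P) :
  hopf_map (Gstruct E) (Gstruct P) (proj1_sig fg).2.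
Proof.
case: fg => [[f g] [hf hg hpi hrho]] /=.
move: hf hg hpi hrho => /= hf hg hpi hrho.
have c1E := inv_of1 (cc_bij E); have c2E := inv_of2 (cc_bij E).
have c1P := inv_of1 (cc_bij P); have c2P := inv_of2 (cc_bij P).
have key : forall y, @ccinv P (f y) = g (@ccinv E y).
  by move=> y; rewrite /ccinv -{1}(c2E y) -hpi c1P.
have hpinvP := pinvl (cc_lin P) c1P c2P.
case: (hg) => lg g1 gM _ _.
split=> //.
- move=> x; apply: teq2I => F hF.
  rewrite /= tDE hpi (hmapDE (F := fun p => F (@ccinv P p.1, @ccinv P p.2)) _ hf); last by lsolve.
  by rewrite big_map tDE; apply: eq_bigr => p _; rewrite /= !key.
- by move=> x; rewrite /= /te hpi; case: hf => _ _ _ _ ->.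
Qed.

Lemma G_hom_prop (E P : cocycle_on h) (fg : cc_hom E P) :
  hb_hom_prop (Gobj E) (Gobj P) (proj1_sig fg).2.
Proof. by split; [case: fg => [[f g] [hf hg hpi hrho]] | exact: G_hom]. Qed.

Definition Gmap (E P : cocycle_on h) (fg : cc_hom E P) : cb_hom (Gobj E) (Gobj P) :=
  exist _ _ (G_hom_prop fg).

Definition Gfun : functor (CC h) (CB h).
Proof.
refine (@Functor (CC h) (CB h) Gobj Gmap _ _).
- by move=> x; apply: sig_eq_val.
- by move=> x y z f g; apply: sig_eq_val.
Defined.


Lemma ccinvF (B : hopf_brace_on h) y : inv_of (cc_bij (Fobj B)) y = y.
Proof. exact: (inv_of2 (cc_bij (Fobj B)) y). Qed.

Lemma eta1_prop (B : hopf_brace_on h) : hb_hom_prop (Gobj (Fobj B)) B (fun x => x).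
Proof.
split; first exact: hopf_map_id.
split=> // x; apply: teq2I => F hF.
by rewrite big_map /= tDE -(sum_pair _ F); apply: eq_bigr => p _; rewrite /= !ccinvF.
Qed.

Lemma eta1inv_prop (B : hopf_brace_on h) : hb_hom_prop B (Gobj (Fobj B)) (fun x => x).
Proof.
split; first exact: hopf_map_id.
split=> // x; apply: teq2I => F hF.
rewrite big_map /Gobj /Gstruct /transp /= big_map.
by apply: eq_bigr => p _; rewrite !ccinvF.
Qed.

Definition eta1 (B : hopf_brace_on h) : cb_hom (Gobj (Fobj B)) B := exist _ _ (eta1_prop B).
Definition eta1inv (B : hopf_brace_on h) : cb_hom B (Gobj (Fobj B)) := exist _ _ (eta1inv_prop B).

Lemma nat1 : nat_iso (comp_functor Gfun Ffun) (id_functor (CB h)).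
Proof.
exists eta1; split.
- by move=> B; exists (eta1inv B); split; apply: sig_eq_val.
- by move=> B1 B2 f; apply: sig_eq_val.
Qed.

Lemma eta2_prop (E : cocycle_on h) :
  cc_hom_prop (E := Fobj (Gobj E)) (P := E) (cc_pi E, fun x => x).
Proof.
split => //=.
- exact: pi_hmap.
- exact: hopf_map_id.
- move=> x; exact: (rho_back (cc_comod E) (@cc_coc E) (cc_lin E) (cc_one E) (@cc_mul E)
       (inv_of1 (cc_bij E)) (inv_of2 (cc_bij E)) x).
Qed.

Lemma eta2inv_prop (E : cocycle_on h) :
  cc_hom_prop (E := E) (P := Fobj (Gobj E)) (@ccinv E, fun x => x).
Proof.
have c1 := inv_of1 (cc_bij E); have c2 := inv_of2 (cc_bij E).
have hpinv := pinvl (cc_lin E) c1 c2.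
split => //=.
- exact: pinv_hmap.
- exact: hopf_map_id.
- by move=> x; rewrite /ccinv c1.
- move=> x.
  have R := rho_back (cc_comod E) (@cc_coc E) (cc_lin E) (cc_one E) (@cc_mul E) c1 c2 x.
  apply: teq2_trans (teq2_map hpinv (@V_id _ _) (teq2_sym R)).
  apply: teq2I => F hF; rewrite -(sum_pair _ F) !big_map.
  by apply: eq_bigr => p _; rewrite /= /ccinv c1.
Qed.

Definition eta2 (E : cocycle_on h) : cc_hom (Fobj (Gobj E)) E := exist _ _ (eta2_prop E).
Definition eta2inv (E : cocycle_on h) : cc_hom E (Fobj (Gobj E)) := exist _ _ (eta2inv_prop E).

Lemma nat2 : nat_iso (comp_functor Ffun Gfun) (id_functor (CC h)).
Proof.
exists eta2; split.
- move=> E; exists (eta2inv E); split; apply: sig_eq_val => /=; congr pair;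
    apply: functional_extensionality => x.
  + exact: (inv_of1 (cc_bij E)).
  + exact: (inv_of2 (cc_bij E)).
- move=> E P [[f g] [hf hg hpi hrho]]; apply: sig_eq_val => /=; congr pair.
  by apply: functional_extensionality => x; apply: hpi.
Qed.

Theorem main_equiv : cat_equivalent (CB h) (CC h).
Proof. by exists Ffun, Gfun; split; [exact: nat1 | exact: nat2]. Qed.

End Main.


Theorem theorem2p12 (k : fieldType) (A : algType k) (h : hopf_struct A) :
  cat_equivalent (CB h) (CC h).
Proof. exact: main_equiv. Qed.
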